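(* There exist a continuous map $f : \mathbb{R}^2 \to \mathbb{R}^2$ and a fixed point $p$ of $f$ such that $p$ has a neighborhood containing no periodic point of $f$ other than $p$, $\{p\}$ is not an isolated invariant set, and $i(f^n,p) = 2^n - 1$ for every $n \ge 1$ (in particular the sequence $\{i(f^n,p)\}_{n\ge1}$ is unbounded).
   Context: $i(g,p)$ is the fixed point index. $\{p\}$ is an isolated invariant set if there is a compact $N$ with $\{p\} = \mathrm{Inv}(f,N) \subset \mathrm{int}(N)$, where $\mathrm{Inv}(f,N)$ is the set of $x \in N$ admitting a sequence $(x_n)_{n\in\mathbb{Z}}\subset N$ with $x_0=x$, $f(x_n)=x_{n+1}$. *)

(* Defs.v *)
From Stdlib Require Import Reals List ZArith.
Open Scope R_scope.

Definition R2 : Type := (R * R)%type.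

Definition add2 (x y : R2) : R2 := (fst x + fst y, snd x + snd y).
Definition sub2 (x y : R2) : R2 := (fst x - fst y, snd x - snd y).
Definition dist2 (x y : R2) : R :=
  sqrt ((fst x - fst y) ^ 2 + (snd x - snd y) ^ 2).

Definition continuous2 (f : R2 -> R2) : Prop :=
  forall x eps, 0 < eps -> exists delta, 0 < delta /\
    forall y, dist2 y x < delta -> dist2 (f y) (f x) < eps.

Definition iter2 (n : nat) (f : R2 -> R2) : R2 -> R2 := Nat.iter n f.

Definition open2 (U : R2 -> Prop) : Prop :=
  forall x, U x -> exists eps, 0 < eps /\ forall y, dist2 y x < eps -> U y.

Definition compact2 (K : R2 -> Prop) : Prop :=
  forall (I : Type) (U : I -> R2 -> Prop),
    (forall i, open2 (U i)) ->
    (forall x, K x -> exists i, U i x) ->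
    exists l : list I, forall x, K x -> exists i, In i l /\ U i x.

Definition interior2 (N : R2 -> Prop) (x : R2) : Prop :=
  exists eps, 0 < eps /\ forall y, dist2 y x < eps -> N y.

Definition Inv (f : R2 -> R2) (N : R2 -> Prop) (x : R2) : Prop :=
  N x /\ exists xs : Z -> R2,
    xs 0%Z = x /\ (forall n, N (xs n)) /\ (forall n, f (xs n) = xs (n + 1)%Z).

Definition isolated_invariant_singleton (f : R2 -> R2) (p : R2) : Prop :=
  exists N : R2 -> Prop, compact2 N /\
    (forall x, Inv f N x <-> x = p) /\ interior2 N p.

Definition periodic_point (f : R2 -> R2) (x : R2) : Prop :=
  exists n : nat, (1 <= n)%nat /\ iter2 n f x = x.

(* oriented angle from vector a to vector b, in (-PI, PI] (atan2 of cross, dot) *)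
Definition angle2 (a b : R2) : R :=
  let c := fst a * snd b - snd a * fst b in
  let d := fst a * fst b + snd a * snd b in
  if Rlt_dec 0 d then atan (c / d)
  else if Rlt_dec d 0 then
    (if Rle_dec 0 c then atan (c / d) + PI else atan (c / d) - PI)
  else if Rlt_dec 0 c then PI / 2
  else if Rlt_dec c 0 then - (PI / 2) else 0.

Fixpoint rsum (F : nat -> R) (n : nat) : R :=
  match n with O => 0 | S m => rsum F m + F m end.

(* winding number around 0 of a loop gamma : [0,1] -> R^2 \ {0}:
   for all sufficiently fine uniform partitions, the sum of the angle
   increments equals 2 PI k *)
Definition winding_number (gamma : R -> R2) (k : Z) : Prop :=
  exists N0 : nat, forall N : nat, (N0 <= N)%nat ->
    rsum (fun j => angle2 (gamma (INR j / INR N)) (gamma (INR (S j) / INR N))) N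
    = 2 * PI * IZR k.

(* fixed point index i(g,p) = deg(id - g) at an isolated fixed point p,
   computed as the winding number of x - g x on small circles around p *)
Definition fixed_point_index (g : R2 -> R2) (p : R2) (k : Z) : Prop :=
  g p = p /\
  exists r0, 0 < r0 /\
    (forall x, dist2 x p <= r0 -> g x = x -> x = p) /\
    forall r, 0 < r -> r < r0 ->
      winding_number
        (fun t => let x := add2 p (r * cos (2 * PI * t), r * sin (2 * PI * t)) in
                  sub2 x (g x)) k.

(* Main.v *)
Require Import Defs.
From Stdlib Require Import Reals ZArith Lra Lia.
Open Scope R_scope.

Lemma PI_gt2 : 2 < PI.
Proof. pose proof PI2_1; lra. Qed.

Lemma sin_periodZ : forall x k, sin (x + 2 * PI * IZR k) = sin x.
Proof.
  intros x k. destruct (Z_le_gt_dec 0 k) as [Hk|Hk].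
  - rewrite <- (Z2Nat.id k Hk), <- INR_IZR_INZ.
    replace (x + 2 * PI * INR (Z.to_nat k)) with (x + 2 * INR (Z.to_nat k) * PI) by ring.
    apply sin_period.
  - assert (0 <= - k)%Z by lia.
    rewrite <- (sin_period (x + 2 * PI * IZR k) (Z.to_nat (-k))).
    rewrite INR_IZR_INZ, Z2Nat.id by lia. rewrite opp_IZR. f_equal; ring.
Qed.

Lemma cos_periodZ : forall x k, cos (x + 2 * PI * IZR k) = cos x.
Proof.
  intros x k. destruct (Z_le_gt_dec 0 k) as [Hk|Hk].
  - rewrite <- (Z2Nat.id k Hk), <- INR_IZR_INZ.
    replace (x + 2 * PI * INR (Z.to_nat k)) with (x + 2 * INR (Z.to_nat k) * PI) by ring.
    apply cos_period.
  - assert (0 <= - k)%Z by lia.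
    rewrite <- (cos_period (x + 2 * PI * IZR k) (Z.to_nat (-k))).
    rewrite INR_IZR_INZ, Z2Nat.id by lia. rewrite opp_IZR. f_equal; ring.
Qed.

Lemma rep_exists : forall x, exists k : Z, exists v, x = v + 2 * PI * IZR k /\ - PI <= v < PI.
Proof.
  intros x. pose proof PI_RGT_0.
  destruct (archimed ((x - PI) / (2 * PI))) as [H1 H2].
  exists (up ((x - PI) / (2 * PI))), (x - 2 * PI * IZR (up ((x - PI) / (2 * PI)))).
  split; [ring|].
  set (k := IZR (up ((x - PI) / (2 * PI)))) in *.
  assert (Hk1 : x - PI < 2 * PI * k).
  { apply Rmult_lt_compat_l with (r := 2*PI) in H1; [|lra].
    replace (2 * PI * ((x - PI) / (2 * PI))) with (x - PI) in H1 by (field; lra). lra. }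
  assert (Hk2 : 2 * PI * k <= x + PI).
  { apply Rmult_le_compat_l with (r := 2*PI) in H2; [|lra].
    replace (2 * PI * (k - (x - PI) / (2 * PI))) with (2*PI*k - (x - PI)) in H2 by (field; lra). lra. }
  lra.
Qed.

Lemma cos_eq1_small : forall v, - PI <= v < PI -> cos v = 1 -> v = 0.
Proof.
  intros v Hv Hc. pose proof PI_RGT_0.
  destruct (Rtotal_order v 0) as [Hl|[He|Hg]]; auto.
  - assert (cos (- v) < cos 0) by (apply cos_decreasing_1; lra).
    rewrite cos_neg, cos_0 in H0. lra.
  - assert (cos v < cos 0) by (apply cos_decreasing_1; lra).
    rewrite cos_0 in H0. lra.
Qed.

Lemma cos_sin_eq : forall a b, cos a = cos b -> sin a = sin b ->
  exists k : Z, a = b + 2 * PI * IZR k.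
Proof.
  intros a b Hc Hs. destruct (rep_exists (a - b)) as [k [v [Hv Hr]]].
  exists k. assert (cos (a - b) = 1).
  { rewrite cos_minus, Hc, Hs. pose proof (sin2_cos2 b). unfold Rsqr in H. lra. }
  rewrite Hv, cos_periodZ in H. apply cos_eq1_small in H; auto. lra.
Qed.

Lemma IZR_2PI_small : forall z : Z, Rabs (2 * PI * IZR z) < 2 * PI -> z = 0%Z.
Proof.
  intros z H. pose proof PI_RGT_0.
  rewrite Rabs_mult, (Rabs_right (2*PI)) in H by lra.
  assert (Rabs (IZR z) < 1).
  { apply Rmult_lt_reg_l with (2*PI); lra. }
  rewrite <- abs_IZR in H1. apply lt_IZR in H1. lia.
Qed.

Lemma angle2_polar : forall r1 r2 a b, 0 < r1 -> 0 < r2 -> Rabs (b - a) < PI / 2 ->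
  angle2 (r1 * cos a, r1 * sin a) (r2 * cos b, r2 * sin b) = b - a.
Proof.
  intros r1 r2 a b H1 H2 Hab. unfold angle2; simpl.
  assert (Hc : r1 * cos a * (r2 * sin b) - r1 * sin a * (r2 * cos b) = r1 * r2 * sin (b - a)).
  { rewrite sin_minus. ring. }
  assert (Hd : r1 * cos a * (r2 * cos b) + r1 * sin a * (r2 * sin b) = r1 * r2 * cos (b - a)).
  { rewrite cos_minus. ring. }
  rewrite Hc, Hd.
  assert (Hcos : 0 < cos (b - a)) by (apply cos_gt_0; apply Rabs_def2 in Hab; lra).
  assert (0 < r1 * r2 * cos (b - a)) by (apply Rmult_lt_0_compat; [apply Rmult_lt_0_compat|]; lra).
  destruct (Rlt_dec 0 (r1 * r2 * cos (b - a))); [|lra].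
  replace (r1 * r2 * sin (b - a) / (r1 * r2 * cos (b - a))) with (tan (b - a)).
  - apply atan_tan. apply Rabs_def2 in Hab. lra.
  - unfold tan. field. split; lra.
Qed.

Lemma rsum_ext : forall F G n, (forall j, (j < n)%nat -> F j = G j) -> rsum F n = rsum G n.
Proof.
  intros F G n; induction n; intros H; simpl; auto.
  rewrite IHn by (intros; apply H; lia). rewrite H by lia. reflexivity.
Qed.

Lemma rsum_telescope : forall (L : nat -> R) n, rsum (fun j => L (S j) - L j) n = L n - L 0%nat.
Proof. intros L n; induction n; simpl; [ring| rewrite IHn; ring]. Qed.

Lemma winding_from_lift : forall (gamma : R -> R2) (Lam rho : R -> R) (k : Z),
  (forall t, 0 <= t <= 1 -> continuity_pt Lam t) ->
  (forall t, 0 <= t <= 1 -> 0 < rho t /\ gamma t = (rho t * cos (Lam t), rho t * sin (Lam t))) ->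
  Lam 1 - Lam 0 = 2 * PI * IZR k ->
  winding_number gamma k.
Proof.
  intros gamma Lam rho k Hcont Hrep Hdiff.
  pose proof PI_RGT_0.
  assert (Hu : uniform_continuity Lam (fun t => 0 <= t <= 1)).
  { apply Heine; [apply compact_P3| exact Hcont]. }
  destruct (Hu (mkposreal (PI/2) ltac:(lra))) as [[del Hdel] Hd]. simpl in Hd.
  destruct (archimed (/ del)) as [Ha _].
  assert (Hpos : (0 < up (/ del))%Z).
  { apply lt_IZR. pose proof (Rinv_0_lt_compat del Hdel). simpl. lra. }
  exists (Z.to_nat (up (/ del))). intros N HN.
  assert (HN0 : (0 < N)%nat) by lia.
  assert (HNR : 0 < INR N) by (apply lt_0_INR; lia).
  assert (Hinv : / INR N < del).
  { assert (IZR (up (/del)) <= INR N).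
    { rewrite INR_IZR_INZ. apply IZR_le. lia. }
    apply Rlt_le_trans with (/ (/ del)).
    - apply Rinv_lt_contravar; [apply Rmult_lt_0_compat; [apply Rinv_0_lt_compat|]; lra| lra].
    - rewrite Rinv_inv; lra. }
  rewrite (rsum_ext _ (fun j => Lam (INR (S j) / INR N) - Lam (INR j / INR N))).
  - rewrite (rsum_telescope (fun j => Lam (INR j / INR N))).
    simpl. replace (INR N / INR N) with 1 by (field; lra).
    replace (0 / INR N) with 0 by (field; lra). rewrite Hdiff. reflexivity.
  - intros j Hj.
    assert (Hj1 : 0 <= INR j / INR N <= 1).
    { split. apply Rmult_le_pos; [apply pos_INR| left; apply Rinv_0_lt_compat; lra].
      apply Rmult_le_reg_r with (INR N); [lra|]. unfold Rdiv. rewrite Rmult_assoc, Rinv_l by lra.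
      rewrite Rmult_1_r, Rmult_1_l. apply le_INR; lia. }
    assert (Hj2 : 0 <= INR (S j) / INR N <= 1).
    { split. apply Rmult_le_pos; [apply pos_INR| left; apply Rinv_0_lt_compat; lra].
      apply Rmult_le_reg_r with (INR N); [lra|]. unfold Rdiv. rewrite Rmult_assoc, Rinv_l by lra.
      rewrite Rmult_1_r, Rmult_1_l. apply le_INR; lia. }
    destruct (Hrep _ Hj1) as [Hr1 Hg1]. destruct (Hrep _ Hj2) as [Hr2 Hg2].
    rewrite Hg1, Hg2. apply angle2_polar; auto.
    assert (Hdist : Rabs (INR (S j) / INR N - INR j / INR N) < del).
    { rewrite S_INR. replace ((INR j + 1) / INR N - INR j / INR N) with (/ INR N) by (field; lra).
      rewrite Rabs_right; [lra| left; apply Rinv_0_lt_compat; lra]. }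
    specialize (Hd _ _ Hj2 Hj1 Hdist). exact Hd.
Qed.

Definition E0 : R := 1/10.
Definition W0 : R := 1/4.
Definition s1 : R := sin (1/2).
Definition c0 : R := cos (1/5).
Definition G (v : R) : R := - (Rabs (v + W0) - Rabs (v - W0)) + (Rabs (v + E0) - Rabs (v - E0)).
Definition clampS (s : R) : R := (Rabs (s + s1) - Rabs (s - s1)) / 2.
Definition Phi (t : R) : R := 2 * t + G (asin (clampS (sin t))).
Definition h0 (c : R) : R := 2 - 3/2 * (((c - c0)/(1 - c0)) + Rabs ((c - c0)/(1 - c0))) / 2.
Definition H (t : R) : R := h0 (cos t).

Ltac absr := unfold Rabs in *; repeat match goal with
  | |- context [Rcase_abs ?x] => destruct (Rcase_abs x)
  | H : context [Rcase_abs ?x] |- _ => destruct (Rcase_abs x) end; try lra.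

Lemma Rabs_le_inv : forall x a, Rabs x <= a -> - a <= x <= a.
Proof. intros. absr. Qed.

Lemma s1_bounds : sin W0 < s1 < 1.
Proof.
  pose proof PI2_1. unfold s1, W0. split.
  - apply sin_increasing_1; lra.
  - assert (Hx : sin (1/2) < sin (PI/2)) by (apply sin_increasing_1; lra).
    rewrite sin_PI2 in Hx; lra.
Qed.

Lemma sinW0_pos : 0 < sin W0.
Proof. unfold W0. pose proof PI_gt2. apply sin_gt_0; lra. Qed.

Lemma c0_bounds : cos W0 <= c0 < 1.
Proof.
  pose proof PI_gt2. unfold c0, W0. split.
  - apply cos_decr_1; lra.
  - assert (Hx : cos (1/5) < cos 0) by (apply cos_decreasing_1; lra).
    rewrite cos_0 in Hx; lra.
Qed.

Lemma clampS_id : forall s, Rabs s <= s1 -> clampS s = s.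
Proof. intros s Hs. pose proof s1_bounds. pose proof sinW0_pos. unfold clampS. absr. Qed.

Lemma clampS_bound : forall s, - s1 <= clampS s <= s1.
Proof. intros s. pose proof s1_bounds. pose proof sinW0_pos. unfold clampS. absr. Qed.

Lemma G_small : forall v, Rabs v <= E0 -> G v = 0.
Proof. intros v Hv. unfold G, E0, W0 in *. absr. Qed.
Lemma G_mid_pos : forall v, E0 <= v -> v <= W0 -> G v = 2 * E0 - 2 * v.
Proof. intros v H1 H2. unfold G, E0, W0 in *. absr. Qed.
Lemma G_mid_neg : forall v, - W0 <= v -> v <= - E0 -> G v = - 2 * E0 - 2 * v.
Proof. intros v H1 H2. unfold G, E0, W0 in *. absr. Qed.
Lemma G_big : forall v, W0 <= v -> G v = - 2 * (W0 - E0).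
Proof. intros v H1. unfold G, E0, W0 in *. absr. Qed.

Lemma asin_small : forall v, Rabs v <= W0 -> asin (clampS (sin v)) = v.
Proof.
  intros v Hv. pose proof PI_gt2. pose proof s1_bounds.
  assert (Rabs (sin v) <= sin W0).
  { apply Rabs_le. apply Rabs_le_inv in Hv. destruct Hv as [Hv1 Hv2]. split.
    - rewrite <- sin_neg. apply sin_incr_1; unfold W0 in *; lra.
    - apply sin_incr_1; unfold W0 in *; lra. }
  rewrite clampS_id by lra. apply asin_sin. apply Rabs_le_inv in Hv. unfold W0 in *; lra.
Qed.

Lemma Phi_periodZ : forall t k, Phi (t + 2 * PI * IZR k) = Phi t + 2 * PI * IZR (2 * k).
Proof. intros. unfold Phi. rewrite sin_periodZ, mult_IZR. ring. Qed.

Lemma H_periodZ : forall t k, H (t + 2 * PI * IZR k) = H t.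
Proof. intros. unfold H. rewrite cos_periodZ. reflexivity. Qed.

Definition phi0 (v : R) : R := 2 * v + G v.

Lemma Phi_rep : forall v k, Rabs v <= W0 -> Phi (v + 2 * PI * IZR k) = phi0 v + 2 * PI * IZR (2 * k).
Proof. intros v k Hv. rewrite Phi_periodZ. unfold Phi, phi0. rewrite asin_small; auto. Qed.

Lemma phi0_small : forall v, Rabs v <= E0 -> phi0 v = 2 * v.
Proof. intros. unfold phi0. rewrite G_small; auto; ring. Qed.
Lemma phi0_pos : forall v, E0 <= v -> v <= W0 -> phi0 v = 2 * E0.
Proof. intros. unfold phi0. rewrite G_mid_pos; auto; ring. Qed.
Lemma phi0_neg : forall v, - W0 <= v -> v <= - E0 -> phi0 v = - 2 * E0.
Proof. intros. unfold phi0. rewrite G_mid_neg; auto; ring. Qed.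
Lemma phi0_bound : forall v, Rabs v <= W0 -> Rabs (phi0 v) <= 2 * E0.
Proof.
  intros v Hv. destruct (Rle_dec (Rabs v) E0).
  - rewrite phi0_small; auto. rewrite Rabs_mult, Rabs_right by lra. lra.
  - apply Rnot_le_lt in n. apply Rabs_le_inv in Hv.
    destruct (Rle_dec 0 v).
    + rewrite Rabs_right in n by lra. rewrite phi0_pos by lra.
      rewrite Rabs_right; unfold E0; lra.
    + rewrite Rabs_left in n by lra. rewrite phi0_neg by lra.
      rewrite Rabs_left; unfold E0; lra.
Qed.

Lemma h0_1 : h0 1 = 1/2.
Proof. pose proof c0_bounds. unfold h0. replace ((1 - c0)/(1-c0)) with 1 by (field; lra). absr. Qed.
Lemma h0_low : forall c, c <= c0 -> h0 c = 2.
Proof.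
  intros c Hc. pose proof c0_bounds. unfold h0.
  assert ((c - c0) / (1 - c0) <= 0).
  { apply Rmult_le_reg_r with (1 - c0); [lra|]. unfold Rdiv. rewrite Rmult_assoc, Rinv_l by lra. lra. }
  absr.
Qed.
Lemma h0_bounds : forall c, c <= 1 -> 1/2 <= h0 c <= 2.
Proof.
  intros c Hc. pose proof c0_bounds. unfold h0.
  assert ((c - c0) / (1 - c0) <= 1).
  { apply Rmult_le_reg_r with (1 - c0); [lra|]. unfold Rdiv. rewrite Rmult_assoc, Rinv_l by lra. lra. }
  absr.
Qed.
Lemma H_bounds : forall t, 1/2 <= H t <= 2.
Proof. intros. apply h0_bounds. apply COS_bound. Qed.
Lemma H_off : forall t, cos t < cos W0 -> H t = 2.
Proof. intros. pose proof c0_bounds. apply h0_low. lra. Qed.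
Lemma H_2E : forall k, H (2 * E0 + 2 * PI * IZR k) = 2 /\ H (- 2 * E0 + 2 * PI * IZR k) = 2.
Proof.
  intros. unfold H. rewrite !cos_periodZ. replace (-2 * E0) with (- (2 * E0)) by ring.
  rewrite cos_neg. replace (2 * E0) with (1/5) by (unfold E0; lra).
  split; apply h0_low; unfold c0; lra.
Qed.
Lemma H_0 : forall k, H (2 * PI * IZR k) = 1/2.
Proof. intros. unfold H. replace (2 * PI * IZR k) with (0 + 2 * PI * IZR k) by ring.
  rewrite cos_periodZ, cos_0. apply h0_1. Qed.

Lemma cpt_plus : forall f g x, continuity_pt f x -> continuity_pt g x -> continuity_pt (fun y => f y + g y) x.
Proof. intros f g x Hf Hg; exact (continuity_pt_plus f g x Hf Hg). Qed.
Lemma cpt_minus : forall f g x, continuity_pt f x -> continuity_pt g x -> continuity_pt (fun y => f y - g y) x.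
Proof. intros f g x Hf Hg; exact (continuity_pt_minus f g x Hf Hg). Qed.
Lemma cpt_mult : forall f g x, continuity_pt f x -> continuity_pt g x -> continuity_pt (fun y => f y * g y) x.
Proof. intros f g x Hf Hg; exact (continuity_pt_mult f g x Hf Hg). Qed.
Lemma cpt_opp : forall f x, continuity_pt f x -> continuity_pt (fun y => - f y) x.
Proof. intros f x Hf; exact (continuity_pt_opp f x Hf). Qed.
Lemma cpt_const : forall c x, continuity_pt (fun _ => c) x.
Proof. intros; apply continuity_pt_const; intros ? ?; reflexivity. Qed.
Lemma cpt_id : forall x, continuity_pt (fun y => y) x.
Proof. intros; apply (derivable_continuous_pt id), derivable_pt_id. Qed.
Lemma cpt_comp : forall f g x, continuity_pt f x -> continuity_pt g (f x) -> continuity_pt (fun y => g (f y)) x.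
Proof. intros f g x Hf Hg; exact (continuity_pt_comp f g x Hf Hg). Qed.
Lemma cpt_inv : forall f x, continuity_pt f x -> f x <> 0 -> continuity_pt (fun y => / f y) x.
Proof. intros f x Hf Hn; exact (continuity_pt_inv f x Hf Hn). Qed.
Lemma cpt_div : forall f g x, continuity_pt f x -> continuity_pt g x -> g x <> 0 -> continuity_pt (fun y => f y / g y) x.
Proof. intros f g x Hf Hg Hn; exact (continuity_pt_div f g x Hf Hg Hn). Qed.
Lemma cpt_abs : forall f x, continuity_pt f x -> continuity_pt (fun y => Rabs (f y)) x.
Proof. intros. apply (cpt_comp f Rabs); auto. apply Rcontinuity_abs. Qed.
Lemma cpt_sin : forall f x, continuity_pt f x -> continuity_pt (fun y => sin (f y)) x.
Proof. intros. apply (cpt_comp f sin); auto. apply continuity_sin. Qed.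
Lemma cpt_cos : forall f x, continuity_pt f x -> continuity_pt (fun y => cos (f y)) x.
Proof. intros. apply (cpt_comp f cos); auto. apply continuity_cos. Qed.
Lemma cpt_atan : forall f x, continuity_pt f x -> continuity_pt (fun y => atan (f y)) x.
Proof. intros. apply (cpt_comp f atan); auto. apply derivable_continuous_pt. apply derivable_pt_atan. Qed.

Ltac cont := repeat (match goal with
  | |- continuity_pt (fun _ => ?c) _ => apply cpt_const
  | |- continuity_pt (fun y => y) _ => apply cpt_id
  | |- continuity_pt (Rmult ?c) _ => apply (cpt_mult (fun _ => c) (fun y => y))
  | |- continuity_pt (Rplus ?c) _ => apply (cpt_plus (fun _ => c) (fun y => y))
  | |- continuity_pt sin _ => apply continuity_sin
  | |- continuity_pt cos _ => apply continuity_cos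
  | |- continuity_pt (fun y => _ + _) _ => apply cpt_plus
  | |- continuity_pt (fun y => _ - _) _ => apply cpt_minus
  | |- continuity_pt (fun y => _ * _) _ => apply cpt_mult
  | |- continuity_pt (fun y => - _) _ => apply cpt_opp
  | |- continuity_pt (fun y => Rabs _) _ => apply cpt_abs
  | |- continuity_pt (fun y => sin _) _ => apply cpt_sin
  | |- continuity_pt (fun y => cos _) _ => apply cpt_cos
  | |- continuity_pt (fun y => atan _) _ => apply cpt_atan
  end).

Lemma cont_G : forall x, continuity_pt G x.
Proof. intros x. unfold G. cont. Qed.

Lemma cont_clampS : forall x, continuity_pt clampS x.
Proof. intros x. unfold clampS. unfold Rdiv. cont. Qed.

Lemma cont_asin_in : forall x, -1 < x < 1 -> continuity_pt asin x.
Proof. intros. apply derivable_continuous_pt. apply derivable_pt_asin. auto. Qed.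

Lemma cont_Phi : forall x, continuity_pt Phi x.
Proof.
  intros x. unfold Phi. apply cpt_plus; [cont|].
  apply (cpt_comp (fun y => asin (clampS (sin y))) G); [|apply cont_G].
  apply (cpt_comp (fun y => clampS (sin y)) asin).
  - apply (cpt_comp sin clampS); [apply continuity_sin| apply cont_clampS].
  - apply cont_asin_in. pose proof (clampS_bound (sin x)). pose proof s1_bounds. pose proof sinW0_pos. lra.
Qed.

Lemma cont_h0 : forall x, continuity_pt h0 x.
Proof. intros x. unfold h0. unfold Rdiv. cont. Qed.

Lemma cont_H : forall x, continuity_pt H x.
Proof. intros x. unfold H. apply (cpt_comp cos h0); [apply continuity_cos| apply cont_h0]. Qed.

Definition Phin (n : nat) : R -> R := Nat.iter n Phi.
Fixpoint Hn (n : nat) (t : R) : R :=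
  match n with O => 1 | S m => Hn m t * H (Phin m t) end.

Lemma Phin_S : forall n t, Phin (S n) t = Phi (Phin n t).
Proof. reflexivity. Qed.

Lemma Phin_periodZ : forall n t k,
  Phin n (t + 2 * PI * IZR k) = Phin n t + 2 * PI * IZR (2 ^ Z.of_nat n * k).
Proof.
  induction n; intros t k.
  - change (Phin 0 (t + 2*PI*IZR k) = Phin 0 t + 2*PI*IZR (1 * k)). rewrite Z.mul_1_l. reflexivity.
  - rewrite !Phin_S, IHn, Phi_periodZ. f_equal. f_equal. f_equal.
    rewrite Nat2Z.inj_succ, Z.pow_succ_r by lia. ring.
Qed.

Lemma Hn_periodZ : forall n t k, Hn n (t + 2 * PI * IZR k) = Hn n t.
Proof.
  induction n; intros; simpl; auto. rewrite IHn, Phin_periodZ, H_periodZ. reflexivity.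
Qed.

Lemma Hn_pos : forall n t, 0 < Hn n t.
Proof.
  induction n; intros; simpl; [lra|]. pose proof (H_bounds (Phin n t)).
  apply Rmult_lt_0_compat; auto; lra.
Qed.

Lemma Hn_const : forall n t c, (forall j, (j < n)%nat -> H (Phin j t) = c) -> Hn n t = c ^ n.
Proof.
  induction n; intros t c Hj; simpl; auto.
  rewrite (IHn t c) by (intros; apply Hj; lia). rewrite Hj by lia. ring.
Qed.

Definition Sset (t : R) : Prop := cos W0 <= cos t.

Lemma S_rep : forall t, Sset t -> exists v m, t = v + 2 * PI * IZR m /\ Rabs v <= W0.
Proof.
  intros t Ht. destruct (rep_exists t) as [m [v [Hv Hr]]]. exists v, m. split; auto.
  unfold Sset in Ht. rewrite Hv, cos_periodZ in Ht. pose proof PI_gt2 as Hpi.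
  destruct (Rle_dec (Rabs v) W0) as [|Hn]; auto. exfalso. apply Rnot_le_lt in Hn.
  assert (Hcv : cos (Rabs v) < cos W0).
  { apply cos_decreasing_1; unfold W0 in *; try lra; absr. }
  unfold Rabs in Hcv. destruct (Rcase_abs v); [rewrite cos_neg in Hcv|]; lra.
Qed.

Lemma S_of_rep : forall v m, Rabs v <= W0 -> Sset (v + 2 * PI * IZR m).
Proof.
  intros v m Hv. unfold Sset. rewrite cos_periodZ. pose proof PI_gt2.
  replace (cos v) with (cos (Rabs v)) by (unfold Rabs; destruct (Rcase_abs v); [apply cos_neg|reflexivity]).
  apply cos_decr_1; unfold W0 in *; try lra; absr.
Qed.

Lemma S_inv : forall t, Sset t -> Sset (Phi t).
Proof.
  intros t Ht. destruct (S_rep t Ht) as [v [m [-> Hv]]]. rewrite Phi_rep by auto.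
  apply S_of_rep. pose proof (phi0_bound v Hv). unfold E0, W0 in *. lra.
Qed.

Lemma S_iter : forall j t, Sset t -> Sset (Phin j t).
Proof. induction j; intros; simpl; auto. apply S_inv. apply IHj; auto. Qed.

Lemma Phin_add : forall a b t, Phin (a + b) t = Phin a (Phin b t).
Proof. intros. unfold Phin. apply Nat.iter_add. Qed.

Definition phi0n (n : nat) : R -> R := Nat.iter n phi0.

Lemma phi0n_rep : forall j v m, Rabs v <= W0 ->
  exists mj, Phin j (v + 2 * PI * IZR m) = phi0n j v + 2 * PI * IZR mj /\ Rabs (phi0n j v) <= W0.
Proof.
  induction j; intros v m Hv.
  - exists m. simpl. auto.
  - destruct (IHj v m Hv) as [mj [Hj Hb]]. exists (2 * mj)%Z.
    rewrite Phin_S, Hj, Phi_rep by auto. split; [reflexivity|].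
    simpl. fold (phi0n j v). pose proof (phi0_bound _ Hb). unfold E0, W0 in *; lra.
Qed.

Definition V (u : R) : R :=
  if Rle_dec (Rabs u) E0 then Rabs u
  else if Req_EM_T u (2 * E0) then 3 * E0
  else if Req_EM_T u (- 2 * E0) then 3 * E0 else 2 * E0.

Lemma V_small : forall u, Rabs u <= E0 -> V u = Rabs u.
Proof. intros. unfold V. destruct (Rle_dec (Rabs u) E0); [reflexivity| contradiction]. Qed.
Lemma V_p2 : V (2 * E0) = 3 * E0.
Proof. unfold V. destruct (Rle_dec (Rabs (2*E0)) E0); [unfold E0 in *; absr|].
  destruct (Req_EM_T (2*E0) (2*E0)); [reflexivity| congruence]. Qed.
Lemma V_m2 : V (- 2 * E0) = 3 * E0.
Proof. unfold V. destruct (Rle_dec (Rabs (-2*E0)) E0); [unfold E0 in *; absr|].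
  destruct (Req_EM_T (-2*E0) (2*E0)); [unfold E0 in *; lra|].
  destruct (Req_EM_T (-2*E0) (-2*E0)); [reflexivity| congruence]. Qed.
Lemma V_oth : forall u, E0 < Rabs u -> u <> 2 * E0 -> u <> - 2 * E0 -> V u = 2 * E0.
Proof. intros. unfold V. destruct (Rle_dec (Rabs u) E0); [lra|].
  destruct (Req_EM_T u (2*E0)); [contradiction|].
  destruct (Req_EM_T u (-2*E0)); [contradiction| reflexivity]. Qed.

Lemma V_mono : forall u, Rabs u <= W0 -> V u <= V (phi0 u) /\
  (V u = V (phi0 u) -> u = 0 \/ u = 2 * E0 \/ u = - 2 * E0).
Proof.
  intros u Hu. pose proof (Rabs_le_inv _ _ Hu) as Hu'.
  destruct (Rle_dec (Rabs u) E0) as [Hs|Hs].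
  - rewrite phi0_small by auto. rewrite V_small by auto.
    destruct (Rle_dec (Rabs (2*u)) E0) as [H2|H2].
    + rewrite V_small by auto. rewrite Rabs_mult, (Rabs_right 2) by lra.
      split; [pose proof (Rabs_pos u); lra|]. intros Heq. left.
      assert (Hz : Rabs u = 0) by lra. revert Hz; absr.
    + apply Rnot_le_lt in H2.
      assert (Hv2 : V (2*u) >= 2 * E0).
      { destruct (Req_EM_T (2*u) (2*E0)) as [->|]; [rewrite V_p2; unfold E0; lra|].
        destruct (Req_EM_T (2*u) (-2*E0)) as [->|]; [rewrite V_m2; unfold E0; lra|].
        rewrite V_oth; auto; lra. }
      unfold E0 in *. split; intros; lra.
  - apply Rnot_le_lt in Hs.
    assert (Hv3 : V (phi0 u) = 3 * E0).
    { destruct (Rle_dec 0 u).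
      + rewrite phi0_pos by (rewrite Rabs_right in Hs; lra). apply V_p2.
      + rewrite phi0_neg by (rewrite Rabs_left in Hs; lra). apply V_m2. }
    rewrite Hv3.
    destruct (Req_EM_T u (2*E0)) as [->|]; [rewrite V_p2; split; [lra| auto]|].
    destruct (Req_EM_T u (-2*E0)) as [->|]; [rewrite V_m2; split; [lra| auto]|].
    rewrite V_oth; auto. unfold E0; split; intros; lra.
Qed.

Lemma phi0n_bound : forall j v, Rabs v <= W0 -> Rabs (phi0n j v) <= W0.
Proof.
  induction j; intros v Hv; simpl; auto. fold (phi0n j v). pose proof (phi0_bound _ (IHj v Hv)).
  unfold E0, W0 in *; lra.
Qed.

Lemma V_chain : forall j v, Rabs v <= W0 -> V (phi0 v) <= V (phi0n (S j) v).
Proof.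
  induction j; intros v Hv; [simpl; lra|].
  apply Rle_trans with (V (phi0n (S j) v)); auto.
  change (phi0n (S (S j)) v) with (phi0 (phi0n (S j) v)).
  apply V_mono. apply phi0n_bound; auto.
Qed.

Lemma fixed_phi0 : forall v, v = 0 \/ v = 2 * E0 \/ v = - 2 * E0 -> phi0 v = v.
Proof.
  intros v [->|[->| ->]].
  - rewrite phi0_small; [ring| unfold E0; absr].
  - apply phi0_pos; unfold E0, W0; lra.
  - apply phi0_neg; unfold E0, W0; lra.
Qed.

Lemma phi0n_fixed : forall j v, phi0 v = v -> phi0n j v = v.
Proof. induction j; intros; simpl; auto. fold (phi0n j v). rewrite IHj; auto. Qed.

Lemma dyn : forall n t k, (1 <= n)%nat -> Phin n t = t + 2 * PI * IZR k ->
  Hn n t = 2 ^ n \/ ((exists m, t = 2 * PI * IZR m) /\ Hn n t = (1/2) ^ n).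
Proof.
  intros n t k Hn1 Hfix.
  destruct (Rle_dec (cos W0) (cos t)) as [HS|HS].
  - destruct (S_rep t HS) as [v [m [Ht Hv]]].
    destruct (phi0n_rep n v m Hv) as [mn [Hn' Hb]].
    rewrite Ht, Hn' in Hfix.
    assert (Heq : phi0n n v = v).
    { assert (Ha : phi0n n v - v = 2 * PI * IZR (m + k - mn)) by (rewrite minus_IZR, plus_IZR; lra).
      assert (Hb2 : Rabs (phi0n n v - v) < 2 * PI).
      { pose proof PI_gt2. apply Rabs_le_inv in Hv. apply Rabs_le_inv in Hb. unfold W0 in *.
        apply Rabs_def1; lra. }
      rewrite Ha in Hb2. apply IZR_2PI_small in Hb2. rewrite Hb2 in Ha. simpl in Ha. lra. }
    assert (Hfx : v = 0 \/ v = 2 * E0 \/ v = - 2 * E0).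
    { destruct n as [|n']; [lia|].
      pose proof (V_chain n' v Hv) as Hc. rewrite Heq in Hc.
      destruct (V_mono v Hv) as [Hm1 Hm2]. apply Hm2. lra. }
    assert (Hph : forall j, (j < n)%nat -> exists mj, Phin j t = v + 2 * PI * IZR mj).
    { intros j _. destruct (phi0n_rep j v m Hv) as [mj [Hj _]]. exists mj. rewrite Ht, Hj.
      rewrite phi0n_fixed; auto. apply fixed_phi0; auto. }
    destruct Hfx as [Hz|[Hz|Hz]].
    + right. split; [exists m; rewrite Ht, Hz; ring|].
      apply Hn_const. intros j Hj. destruct (Hph j Hj) as [mj ->]. rewrite Hz, Rplus_0_l. apply H_0.
    + left. apply Hn_const. intros j Hj. destruct (Hph j Hj) as [mj ->]. rewrite Hz. apply H_2E.
    + left. apply Hn_const. intros j Hj. destruct (Hph j Hj) as [mj ->]. rewrite Hz. apply H_2E.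
  - left. apply Hn_const. intros j Hj. apply H_off.
    destruct (Rlt_le_dec (cos (Phin j t)) (cos W0)) as [|Hc]; auto. exfalso. apply HS.
    assert (Hs : Sset (Phin n t)).
    { replace n with ((n - j) + j)%nat by lia. rewrite Phin_add. apply S_iter. exact Hc. }
    unfold Sset in Hs. rewrite Hfix, cos_periodZ in Hs. exact Hs.
Qed.

Definition Nrm (x : R2) : R := sqrt (fst x ^ 2 + snd x ^ 2).

Definition fmap (x : R2) : R2 :=
  let N := Nrm x in let c := fst x / N in let s := snd x / N in
  let g := G (asin (clampS s)) in let A := c * c - s * s in let B := 2 * c * s in
  (N * h0 c * (cos g * A - sin g * B), N * h0 c * (sin g * A + cos g * B)).

Lemma Nrm_polar : forall r t, 0 <= r -> Nrm (r * cos t, r * sin t) = r.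
Proof.
  intros r t Hr. unfold Nrm; cbn [fst snd].
  assert (Heq : (r * cos t) ^ 2 + (r * sin t) ^ 2 = r * r).
  { pose proof (sin2_cos2 t) as Hsc. unfold Rsqr in Hsc. nra. }
  rewrite Heq. apply sqrt_square; auto.
Qed.

Lemma f_polar : forall r t, 0 <= r ->
  fmap (r * cos t, r * sin t) = (r * H t * cos (Phi t), r * H t * sin (Phi t)).
Proof.
  intros r t Hr. unfold fmap. rewrite Nrm_polar by auto. simpl.
  destruct (Req_dec r 0) as [->|Hr0].
  - f_equal; ring.
  - replace (r * cos t / r) with (cos t) by (field; auto).
    replace (r * sin t / r) with (sin t) by (field; auto).
    unfold H, Phi. rewrite cos_plus, sin_plus, cos_2a, sin_2a. f_equal; ring.
Qed.

Lemma iter_polar : forall n r t, 0 <= r ->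
  iter2 n fmap (r * cos t, r * sin t) = (r * Hn n t * cos (Phin n t), r * Hn n t * sin (Phin n t)).
Proof.
  induction n; intros r t Hr.
  - simpl. f_equal; ring.
  - change (iter2 (S n) fmap (r * cos t, r * sin t)) with (fmap (iter2 n fmap (r * cos t, r * sin t))).
    rewrite IHn by auto.
    assert (Hp : 0 <= r * Hn n t) by (pose proof (Hn_pos n t); nra).
    rewrite f_polar by auto. rewrite Phin_S. simpl. f_equal; ring.
Qed.

Lemma polar_exists : forall x : R2, exists r t, 0 <= r /\ r = Nrm x /\ x = (r * cos t, r * sin t).
Proof.
  intros [a b]. set (r := Nrm (a, b)).
  assert (Hr : 0 <= r) by apply sqrt_pos.
  assert (Hr2 : r * r = a * a + b * b).
  { unfold r, Nrm; simpl. rewrite sqrt_sqrt; [ring| nra]. }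
  destruct (Req_dec r 0) as [Hr0|Hr0].
  - exists 0, 0. split; [lra|]. split; [auto|].
    assert (a = 0) by nra. assert (b = 0) by nra. subst. f_equal; ring.
  - assert (Hc : -1 <= a / r <= 1).
    { assert (Ha : Rabs a <= r) by (unfold Rabs; destruct (Rcase_abs a); nra).
      apply Rabs_le_inv in Ha. split.
      - apply Rmult_le_reg_r with r; [lra|]. unfold Rdiv. rewrite Rmult_assoc, Rinv_l by lra. lra.
      - apply Rmult_le_reg_r with r; [lra|]. unfold Rdiv. rewrite Rmult_assoc, Rinv_l by lra. lra. }
    assert (Hs : sqrt (1 - (a / r)²) = Rabs b / r).
    { replace (1 - (a/r)²) with ((Rabs b / r) * (Rabs b / r)).
      - apply sqrt_square. apply Rmult_le_pos; [apply Rabs_pos| left; apply Rinv_0_lt_compat; lra].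
      - assert (Hbb : Rabs b * Rabs b = b * b) by (unfold Rabs; destruct (Rcase_abs b); ring).
        unfold Rdiv, Rsqr. replace ((a * / r) * (a * / r)) with (a * a * / (r * r)) by (field; lra).
        replace (Rabs b * / r * (Rabs b * / r)) with (Rabs b * Rabs b * / (r * r)) by (field; lra).
        rewrite Hbb. replace (b * b) with (r * r - a * a) by lra. field. lra. }
    destruct (Rle_dec 0 b).
    + exists r, (acos (a / r)). split; auto. split; auto.
      rewrite cos_acos, sin_acos by auto. rewrite Hs, Rabs_right by lra. f_equal; field; lra.
    + exists r, (- acos (a / r)). split; auto. split; auto.
      rewrite cos_neg, sin_neg, cos_acos, sin_acos by auto. rewrite Hs, Rabs_left by lra.
      f_equal; field; lra.
Qed.

Lemma pow2_sqr' : forall x, x ^ 2 = x * x.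
Proof. intros; ring. Qed.

Definition cont2 (g : R2 -> R) (x : R2) : Prop :=
  forall eps, 0 < eps -> exists del, 0 < del /\ forall y, dist2 y x < del -> Rabs (g y - g x) < eps.

Lemma cpt_eps : forall k a, continuity_pt k a -> forall eps, 0 < eps ->
  exists alp, 0 < alp /\ forall z, Rabs (z - a) < alp -> Rabs (k z - k a) < eps.
Proof.
  intros k a Hk eps He. destruct (Hk eps He) as [alp [Ha Hz]].
  exists alp. split; auto. intros z Hza. destruct (Req_dec z a) as [->|Hne].
  - unfold Rminus. rewrite Rplus_opp_r, Rabs_R0. auto.
  - apply (Hz z). split; [split; [exact I| auto]| exact Hza].
Qed.

Lemma dist2_fst : forall x y, Rabs (fst y - fst x) <= dist2 y x.
Proof.
  intros. unfold dist2. rewrite <- sqrt_Rsqr_abs. apply sqrt_le_1_alt.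
  unfold Rsqr. rewrite !pow2_sqr'. pose proof (Rle_0_sqr (snd y - snd x)). unfold Rsqr in *. lra.
Qed.
Lemma dist2_snd : forall x y, Rabs (snd y - snd x) <= dist2 y x.
Proof.
  intros. unfold dist2. rewrite <- sqrt_Rsqr_abs. apply sqrt_le_1_alt.
  unfold Rsqr. rewrite !pow2_sqr'. pose proof (Rle_0_sqr (fst y - fst x)). unfold Rsqr in *. lra.
Qed.
Lemma dist2_le : forall a b, dist2 a b <= Rabs (fst a - fst b) + Rabs (snd a - snd b).
Proof.
  intros. unfold dist2.
  set (u := fst a - fst b). set (v := snd a - snd b).
  assert (0 <= Rabs u + Rabs v) by (pose proof (Rabs_pos u); pose proof (Rabs_pos v); lra).
  rewrite <- (sqrt_square (Rabs u + Rabs v)) by auto. apply sqrt_le_1_alt.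
  assert (Rabs u * Rabs u = u * u) by (unfold Rabs; destruct (Rcase_abs u); ring).
  assert (Rabs v * Rabs v = v * v) by (unfold Rabs; destruct (Rcase_abs v); ring).
  pose proof (Rabs_pos u); pose proof (Rabs_pos v). nra.
Qed.

Lemma cont2_const : forall c x, cont2 (fun _ => c) x.
Proof. intros c x eps He. exists 1. split; [lra|]. intros. unfold Rminus. rewrite Rplus_opp_r, Rabs_R0. auto. Qed.
Lemma cont2_fst : forall x, cont2 (fun y => fst y) x.
Proof. intros x eps He. exists eps. split; auto. intros y Hy. pose proof (dist2_fst x y). lra. Qed.
Lemma cont2_snd : forall x, cont2 (fun y => snd y) x.
Proof. intros x eps He. exists eps. split; auto. intros y Hy. pose proof (dist2_snd x y). lra. Qed.
Lemma cont2_plus : forall f g x, cont2 f x -> cont2 g x -> cont2 (fun y => f y + g y) x.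
Proof.
  intros f g x Hf Hg eps He. destruct (Hf (eps/2)) as [d1 [Hd1 H1]]; [lra|].
  destruct (Hg (eps/2)) as [d2 [Hd2 H2]]; [lra|].
  exists (Rmin d1 d2). split; [apply Rmin_glb_lt; auto|]. intros y Hy.
  specialize (H1 y ltac:(pose proof (Rmin_l d1 d2); lra)).
  specialize (H2 y ltac:(pose proof (Rmin_r d1 d2); lra)).
  replace (f y + g y - (f x + g x)) with ((f y - f x) + (g y - g x)) by ring.
  pose proof (Rabs_triang (f y - f x) (g y - g x)). lra.
Qed.
Lemma cont2_comp : forall f k x, cont2 f x -> continuity_pt k (f x) -> cont2 (fun y => k (f y)) x.
Proof.
  intros f k x Hf Hk eps He. destruct (cpt_eps k (f x) Hk eps He) as [alp [Ha Hz]].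
  destruct (Hf alp Ha) as [d [Hd Hy]]. exists d. split; [exact Hd|]. intros y Hyd. apply Hz, Hy, Hyd.
Qed.
Lemma cont2_opp : forall f x, cont2 f x -> cont2 (fun y => - f y) x.
Proof. intros. apply (cont2_comp f Ropp). auto. apply continuity_pt_opp, (derivable_continuous_pt id), derivable_pt_id. Qed.
Lemma cont2_minus : forall f g x, cont2 f x -> cont2 g x -> cont2 (fun y => f y - g y) x.
Proof. intros. apply (cont2_plus f (fun y => - g y)); auto. apply cont2_opp; auto. Qed.
Lemma cont2_mult : forall f g x, cont2 f x -> cont2 g x -> cont2 (fun y => f y * g y) x.
Proof.
  intros f g x Hf Hg.
  assert (Hsq : forall z, continuity_pt (fun w => w * w / 4) z) by (intros; unfold Rdiv; cont).
  assert (Hq : cont2 (fun y => (f y + g y) * (f y + g y) / 4 - (f y - g y) * (f y - g y) / 4) x).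
  { apply cont2_minus.
    - apply (cont2_comp (fun y => f y + g y) (fun w => w * w / 4)); auto. apply cont2_plus; auto.
    - apply (cont2_comp (fun y => f y - g y) (fun w => w * w / 4)); auto. apply cont2_minus; auto. }
  intros eps He. destruct (Hq eps He) as [d [Hd Hy]]. exists d. split; auto. intros y Hyd.
  specialize (Hy y Hyd). replace (f y * g y - f x * g x) with
    ((f y + g y) * (f y + g y) / 4 - (f y - g y) * (f y - g y) / 4 -
     ((f x + g x) * (f x + g x) / 4 - (f x - g x) * (f x - g x) / 4)) by field. auto.
Qed.

Ltac c2 := repeat (match goal with
  | |- cont2 (fun _ => ?c) _ => apply cont2_const
  | |- cont2 (fun y => fst y) _ => apply cont2_fst
  | |- cont2 (fun y => snd y) _ => apply cont2_snd
  | |- cont2 fst _ => apply cont2_fst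
  | |- cont2 snd _ => apply cont2_snd
  | |- cont2 (fun y => _ + _) _ => apply cont2_plus
  | |- cont2 (fun y => _ - _) _ => apply cont2_minus
  | |- cont2 (fun y => _ * _) _ => apply cont2_mult
  | |- cont2 (fun y => - _) _ => apply cont2_opp
  end).

Lemma cont2_Nrm : forall x, cont2 Nrm x.
Proof.
  intros x. unfold Nrm.
  apply (cont2_comp (fun y => fst y ^ 2 + snd y ^ 2) sqrt).
  - simpl. c2.
  - apply continuity_pt_sqrt. nra.
Qed.

Lemma cont2_inv : forall f x, cont2 f x -> f x <> 0 -> cont2 (fun y => / f y) x.
Proof.
  intros f x Hf Hn. apply (cont2_comp f Rinv); auto.
  apply (cpt_inv (fun y => y)); auto. apply cpt_id.
Qed.

Lemma cont2_fmap_comp : forall x, Nrm x <> 0 ->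
  cont2 (fun y => fst (fmap y)) x /\ cont2 (fun y => snd (fmap y)) x.
Proof.
  intros x Hx.
  assert (HN : cont2 Nrm x) by apply cont2_Nrm.
  assert (HiN : cont2 (fun y => / Nrm y) x) by (apply cont2_inv; auto).
  assert (Hc : cont2 (fun y => fst y / Nrm y) x) by (unfold Rdiv; apply cont2_mult; auto; c2).
  assert (Hs : cont2 (fun y => snd y / Nrm y) x) by (unfold Rdiv; apply cont2_mult; auto; c2).
  assert (Hg : cont2 (fun y => G (asin (clampS (snd y / Nrm y)))) x).
  { apply (cont2_comp (fun y => asin (clampS (snd y / Nrm y))) G); [|apply cont_G].
    apply (cont2_comp (fun y => clampS (snd y / Nrm y)) asin).
    - apply (cont2_comp (fun y => snd y / Nrm y) clampS); auto. apply cont_clampS.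
    - apply cont_asin_in. pose proof (clampS_bound (snd x / Nrm x)). pose proof s1_bounds.
      pose proof sinW0_pos. lra. }
  assert (Hcg : cont2 (fun y => cos (G (asin (clampS (snd y / Nrm y))))) x)
    by (apply (cont2_comp _ cos); auto; apply continuity_cos).
  assert (Hsg : cont2 (fun y => sin (G (asin (clampS (snd y / Nrm y))))) x)
    by (apply (cont2_comp _ sin); auto; apply continuity_sin).
  assert (Hh : cont2 (fun y => h0 (fst y / Nrm y)) x)
    by (apply (cont2_comp _ h0); auto; apply cont_h0).
  unfold fmap. cbn [fst snd]. split; repeat (first [exact Hh | exact Hcg | exact Hsg | exact Hc | exact Hs | exact HN | apply cont2_const | apply cont2_mult | apply cont2_minus | apply cont2_plus]).
Qed.

Lemma fmap_0 : fmap (0, 0) = (0, 0).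
Proof.
  unfold fmap, Nrm; simpl. replace (0 * (0 * 1) + 0 * (0 * 1)) with 0 by ring.
  rewrite sqrt_0. f_equal; ring.
Qed.

Lemma dist2_0 : forall x, dist2 x (0,0) = Nrm x.
Proof. intros [a b]. unfold dist2, Nrm; simpl. f_equal; ring. Qed.

Lemma continuous_fmap : continuous2 fmap.
Proof.
  intros x eps He.
  destruct (Req_dec (Nrm x) 0) as [H0|H0].
  - assert (Hx : x = (0,0)).
    { destruct (polar_exists x) as [r [t [Hr [Hrn Hx]]]]. assert (Hr0 : r = 0) by (rewrite Hrn; auto).
      rewrite Hx, Hr0. f_equal; ring. }
    subst x. exists (eps / 2). split; [lra|]. intros y Hy. rewrite fmap_0, dist2_0.
    destruct (polar_exists y) as [r [t [Hr [Hrn ->]]]]. rewrite dist2_0, <- Hrn in Hy.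
    rewrite f_polar by auto. rewrite (Nrm_polar (r * H t)) by (pose proof (H_bounds t); nra).
    pose proof (H_bounds t). nra.
  - destruct (cont2_fmap_comp x H0) as [H1 H2].
    destruct (H1 (eps/2)) as [d1 [Hd1 P1]]; [lra|]. destruct (H2 (eps/2)) as [d2 [Hd2 P2]]; [lra|].
    exists (Rmin d1 d2). split; [apply Rmin_glb_lt; auto|]. intros y Hy.
    specialize (P1 y ltac:(pose proof (Rmin_l d1 d2); lra)).
    specialize (P2 y ltac:(pose proof (Rmin_r d1 d2); lra)).
    pose proof (dist2_le (fmap y) (fmap x)). lra.
Qed.

Lemma pow2_ge2 : forall n, (1 <= n)%nat -> 2 <= 2 ^ n.
Proof.
  induction n; intros Hn; [lia|]. destruct n; [simpl; lra|].
  specialize (IHn ltac:(lia)). simpl in *. lra.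
Qed.
Lemma pow_half_le : forall n, (1 <= n)%nat -> (1/2) ^ n <= 1/2.
Proof.
  induction n; intros Hn; [lia|]. destruct n; [simpl; lra|].
  specialize (IHn ltac:(lia)). simpl in *. assert (0 <= (1/2)^n) by (apply pow_le; lra). lra.
Qed.

Lemma no_fix : forall n x, (1 <= n)%nat -> iter2 n fmap x = x -> x = (0,0).
Proof.
  intros n x Hn1 Hfix. destruct (polar_exists x) as [r [t [Hr [_ Hx]]]].
  destruct (Req_dec r 0) as [Hr0|Hr0].
  - rewrite Hx, Hr0. f_equal; ring.
  - exfalso. rewrite Hx in Hfix. rewrite iter_polar in Hfix by auto.
    injection Hfix as H1 H2.
    assert (Hc : Hn n t * cos (Phin n t) = cos t) by (apply Rmult_eq_reg_l with r; [lra| auto]).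
    assert (Hs : Hn n t * sin (Phin n t) = sin t) by (apply Rmult_eq_reg_l with r; [lra| auto]).
    assert (Hh : Hn n t = 1).
    { pose proof (sin2_cos2 t) as E1. pose proof (sin2_cos2 (Phin n t)) as E2. unfold Rsqr in *.
      pose proof (Hn_pos n t).
      assert (Hn n t * Hn n t = 1) by (rewrite <- Hc, <- Hs in E1; nra). nra. }
    rewrite Hh, Rmult_1_l in Hc, Hs.
    destruct (cos_sin_eq _ _ Hc Hs) as [k Hk].
    destruct (dyn n t k Hn1 Hk) as [Hd|[_ Hd]]; rewrite Hh in Hd.
    + pose proof (pow2_ge2 n Hn1). lra.
    + pose proof (pow_half_le n Hn1). lra.
Qed.

Lemma periodic_zero : forall x, periodic_point fmap x -> x = (0,0).
Proof. intros x [n [Hn1 Hf]]. apply (no_fix n); auto. Qed.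

Definition pt (r t : R) : R2 := (r * cos t, r * sin t).
Definition gb (v : R) : R := v / 2 + (W0 - E0).
Fixpoint thseq (j : nat) : R := match j with O => PI | S j' => gb (thseq j') end.

Lemma asin_ge_W0 : forall z, sin W0 <= z <= 1 -> W0 <= asin z.
Proof.
  intros z Hz. pose proof PI_gt2 as Hpi. pose proof (asin_bound z) as Hb.
  destruct (Rle_dec W0 (asin z)) as [|Hn]; auto. exfalso. apply Rnot_le_lt in Hn.
  assert (Hl : sin (asin z) < sin W0) by (apply sin_increasing_1; unfold W0 in *; lra).
  rewrite sin_asin in Hl by (pose proof sinW0_pos; lra). lra.
Qed.

Lemma Phi_K : forall t, W0 <= t <= PI - W0 -> Phi t = 2 * t - 2 * (W0 - E0) /\ H t = 2.
Proof.
  intros t Ht. pose proof PI_gt2 as Hpi. split.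
  - unfold Phi. rewrite G_big; [ring|]. apply asin_ge_W0.
    assert (Hs : sin W0 <= sin t).
    { destruct (Rle_dec t (PI/2)).
      - apply sin_incr_1; unfold W0 in *; lra.
      - rewrite <- (sin_PI_x t). apply sin_incr_1; unfold W0 in *; lra. }
    pose proof s1_bounds. pose proof (SIN_bound t).
    unfold clampS. absr.
  - unfold H. apply h0_low. pose proof c0_bounds.
    assert (cos t <= cos W0) by (apply cos_decr_1; unfold W0 in *; lra). lra.
Qed.

Lemma f_pt : forall r t, 0 <= r -> fmap (pt r t) = pt (r * H t) (Phi t).
Proof. intros. unfold pt. apply f_polar. auto. Qed.

Lemma thseq_K : forall j, W0 <= thseq (S j) <= PI - W0.
Proof.
  pose proof PI_gt2 as Hpi. pose proof PI2_1 as Hpi2.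
  induction j.
  - simpl. unfold gb, W0, E0. lra.
  - change (thseq (S (S j))) with (gb (thseq (S j))). unfold gb, W0, E0 in *. lra.
Qed.

Lemma Phi_thseq : forall j, Phi (thseq (S j)) = thseq j /\ H (thseq (S j)) = 2.
Proof.
  intros j. destruct (Phi_K _ (thseq_K j)) as [P1 P2]. split; auto.
  rewrite P1. change (thseq (S j)) with (gb (thseq j)). unfold gb. field.
Qed.

Lemma Phi_PI : Phi PI = 2 * PI /\ H PI = 2.
Proof.
  split.
  - unfold Phi. rewrite sin_PI.
    assert (Hc : clampS 0 = 0) by (apply clampS_id; rewrite Rabs_R0; pose proof s1_bounds; pose proof sinW0_pos; lra).
    assert (Hg : G 0 = 0) by (apply G_small; rewrite Rabs_R0; unfold E0; lra).
    rewrite Hc, asin_0, Hg. ring.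
  - unfold H. rewrite cos_PI. apply h0_low. pose proof (COS_bound (1/5)). unfold c0. lra.
Qed.

Lemma Phi_0 : Phi 0 = 0 /\ H 0 = 1/2.
Proof.
  split.
  - unfold Phi. rewrite sin_0.
    assert (Hc : clampS 0 = 0) by (apply clampS_id; rewrite Rabs_R0; pose proof s1_bounds; pose proof sinW0_pos; lra).
    assert (Hg : G 0 = 0) by (apply G_small; rewrite Rabs_R0; unfold E0; lra).
    rewrite Hc, asin_0, Hg. ring.
  - unfold H. rewrite cos_0. apply h0_1.
Qed.

Definition xs (r0 : R) (z : Z) : R2 :=
  if Z_le_dec 0 z then pt (r0 * (1/2) ^ Z.to_nat z) 0
  else pt (r0 * (1/2) ^ Z.to_nat (- z)) (thseq (Z.to_nat (- z) - 1)).

Lemma xs_step : forall r0, 0 < r0 -> forall n, fmap (xs r0 n) = xs r0 (n + 1).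
Proof.
  intros r0 Hr n. unfold xs.
  assert (Hp : forall k, 0 <= r0 * (1/2) ^ k) by (intros; apply Rmult_le_pos; [lra| apply pow_le; lra]).
  destruct (Z_le_dec 0 n) as [Hn0|Hn0].
  - destruct (Z_le_dec 0 (n + 1)) as [_|]; [|lia].
    rewrite f_pt by auto. destruct Phi_0 as [P1 P2]. rewrite P1, P2.
    rewrite Z2Nat.inj_add by lia. rewrite Nat.add_1_r. simpl. f_equal. field.
  - destruct (Z.eq_dec n (-1)) as [->|Hm1].
    + destruct (Z_le_dec 0 (-1 + 1)) as [_|]; [|lia].
      change (Z.to_nat (- -1)) with 1%nat. change (1 - 1)%nat with 0%nat. change (thseq 0) with PI.
      change (Z.to_nat (-1 + 1)) with 0%nat.
      rewrite f_pt by auto. destruct Phi_PI as [P1 P2]. rewrite P1, P2.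
      unfold pt. replace (2 * PI) with (0 + 2 * PI * IZR 1) by (simpl; ring).
      rewrite cos_periodZ, sin_periodZ. f_equal; simpl; field.
    + destruct (Z_le_dec 0 (n + 1)) as [|_]; [lia|].
      rewrite f_pt by auto.
      assert (Hm : Z.to_nat (- n) = S (S (Z.to_nat (- (n + 1)) - 1))) by lia.
      rewrite Hm. replace (S (S (Z.to_nat (- (n + 1)) - 1)) - 1)%nat with (S (Z.to_nat (- (n + 1)) - 1)) by lia.
      destruct (Phi_thseq (Z.to_nat (- (n + 1)) - 1)) as [P1 P2]. rewrite P1, P2.
      assert (Hm2 : Z.to_nat (- (n + 1)) = S (Z.to_nat (- (n + 1)) - 1)) by lia.
      set (m := (Z.to_nat (- (n + 1)) - 1)%nat) in *. rewrite Hm2.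
      simpl. rewrite ?Nat.sub_0_r. f_equal. field.
Qed.

Lemma xs_norm : forall r0 n, 0 < r0 -> Nrm (xs r0 n) <= r0.
Proof.
  intros r0 n Hr. unfold xs.
  assert (Hb : forall k, (1/2) ^ k <= 1).
  { induction k; simpl; [lra|]. assert (0 <= (1/2)^k) by (apply pow_le; lra). lra. }
  assert (Hp : forall k, 0 <= (1/2) ^ k) by (intros; apply pow_le; lra).
  destruct (Z_le_dec 0 n); unfold pt; rewrite Nrm_polar by (apply Rmult_le_pos; [lra| auto]);
  specialize (Hb (Z.to_nat n)); specialize (Hp (Z.to_nat n));
  pose proof (Hb) ; nra || (clear Hb Hp; idtac).
  all: try (assert ((1/2) ^ Z.to_nat (- n) <= 1) by (clear; induction (Z.to_nat (- n)); simpl; [lra|]; assert (0 <= (1/2)^n0) by (apply pow_le; lra); lra);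
    assert (0 <= (1/2) ^ Z.to_nat (- n)) by (apply pow_le; lra); nra).
Qed.

Lemma not_isolated : ~ isolated_invariant_singleton fmap (0,0).
Proof.
  intros [N [_ [Hinv [eps [He Hint]]]]].
  set (r0 := eps / 2).
  assert (Hr0 : 0 < r0) by (unfold r0; lra).
  assert (HN : forall n, N (xs r0 n)).
  { intros n. apply Hint. rewrite dist2_0. pose proof (xs_norm r0 n Hr0). unfold r0 in *. lra. }
  assert (Hi : Inv fmap N (xs r0 0)).
  { split; auto. exists (xs r0). split; [reflexivity|]. split; auto. apply xs_step; auto. }
  apply Hinv in Hi. unfold xs in Hi. simpl in Hi. unfold pt in Hi. injection Hi as H1 H2.
  rewrite cos_0 in H1. lra.
Qed.

Definition rw (h p : R) : R := sqrt ((1 - h * cos p) ^ 2 + (h * sin p) ^ 2).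
Definition br1 (h p : R) : R := atan (- h * sin p / (1 - h * cos p)).
Definition br2 (h p : R) : R := p - PI + atan (sin p / (h - cos p)).
Definition Fl (h p : R) : R :=
  if Rlt_dec 1 h then br2 h p else 2 * PI * IZR (Int_part (p / (2 * PI))) + br1 h p.

Lemma rw_alt : forall h p, (1 - h * cos p) ^ 2 + (h * sin p) ^ 2 = (h - cos p) ^ 2 + (sin p) ^ 2.
Proof. intros. pose proof (sin2_cos2 p) as E. unfold Rsqr in E. nra. Qed.

Lemma sqrt_ratio : forall d u, 0 < d -> sqrt (1 + (u / d)²) = sqrt (d ^ 2 + u ^ 2) / d.
Proof.
  intros d u Hd. apply sqrt_lem_1.
  - pose proof (Rle_0_sqr (u/d)). lra.
  - apply Rmult_le_pos; [apply sqrt_pos| left; apply Rinv_0_lt_compat; lra].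
  - unfold Rdiv. replace (sqrt (d ^ 2 + u ^ 2) * / d * (sqrt (d ^ 2 + u ^ 2) * / d))
      with ((sqrt (d ^ 2 + u ^ 2) * sqrt (d ^ 2 + u ^ 2)) * / (d * d)) by (field; lra).
    rewrite sqrt_sqrt by nra. unfold Rsqr. field. lra.
Qed.

Lemma rw_pos1 : forall h p, 0 < 1 - h * cos p -> 0 < rw h p.
Proof. intros. unfold rw. apply sqrt_lt_R0. nra. Qed.
Lemma rw_pos2 : forall h p, 0 < h - cos p -> 0 < rw h p.
Proof. intros. unfold rw. rewrite rw_alt. apply sqrt_lt_R0. nra. Qed.

Lemma L1 : forall h p, 0 < 1 - h * cos p ->
  cos (br1 h p) = (1 - h * cos p) / rw h p /\ sin (br1 h p) = - h * sin p / rw h p.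
Proof.
  intros h p Hd. pose proof (rw_pos1 h p Hd) as Hr. unfold br1.
  assert (Hs : sqrt (1 + (- h * sin p / (1 - h * cos p))²) = rw h p / (1 - h * cos p)).
  { rewrite sqrt_ratio by auto. unfold rw. f_equal. f_equal. ring. }
  rewrite cos_atan, sin_atan, Hs. split; field; lra.
Qed.

Lemma L2 : forall h p, 0 < h - cos p ->
  cos (br2 h p) = (1 - h * cos p) / rw h p /\ sin (br2 h p) = - h * sin p / rw h p.
Proof.
  intros h p Hd. pose proof (rw_pos2 h p Hd) as Hr. unfold br2.
  assert (Hs : sqrt (1 + (sin p / (h - cos p))²) = rw h p / (h - cos p)).
  { rewrite sqrt_ratio by auto. unfold rw. rewrite rw_alt. reflexivity. }
  set (a := atan (sin p / (h - cos p))).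
  assert (Ca : cos a = (h - cos p) / rw h p) by (unfold a; rewrite cos_atan, Hs; field; lra).
  assert (Sa : sin a = sin p / rw h p) by (unfold a; rewrite sin_atan, Hs; field; lra).
  replace (p - PI + a) with ((p + a) - PI) by ring.
  rewrite cos_minus, sin_minus, cos_PI, sin_PI, cos_plus, sin_plus, Ca, Sa.
  pose proof (sin2_cos2 p) as E. unfold Rsqr in E.
  split; field_simplify; try lra; f_equal; nra.
Qed.

Lemma pos_branch : forall h p, 0 <= h -> ~ (h = 1 /\ cos p = 1) -> 0 < 1 - h * cos p \/ 1 < h.
Proof.
  intros h p Hh Hn. destruct (Rlt_dec 1 h); [right; auto|]. left.
  pose proof (COS_bound p).
  destruct (Req_dec h 1) as [->|]; [destruct (Req_dec (cos p) 1); [exfalso; tauto| lra]|].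
  nra.
Qed.

Lemma rw_pos : forall h p, 0 <= h -> ~ (h = 1 /\ cos p = 1) -> 0 < rw h p.
Proof.
  intros. destruct (pos_branch h p) as [Hb|Hb]; auto.
  - apply rw_pos1; auto.
  - apply rw_pos2. pose proof (COS_bound p). lra.
Qed.

Lemma Fl_lift : forall h p, 0 <= h -> ~ (h = 1 /\ cos p = 1) ->
  cos (Fl h p) = (1 - h * cos p) / rw h p /\ sin (Fl h p) = - h * sin p / rw h p.
Proof.
  intros h p Hh Hn. unfold Fl. destruct (Rlt_dec 1 h).
  - apply L2. pose proof (COS_bound p). lra.
  - destruct (pos_branch h p) as [Hb|Hb]; auto; [|lra].
    rewrite Rplus_comm, cos_periodZ, sin_periodZ. apply L1; auto.
Qed.

Lemma IP_spec : forall x k, IZR k <= x < IZR k + 1 -> Int_part x = k.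
Proof. intros. symmetry. apply Int_part_spec. lra. Qed.

Lemma IP_bounds : forall x, IZR (Int_part x) <= x < IZR (Int_part x) + 1.
Proof. intros. pose proof (base_Int_part x). lra. Qed.

Lemma Fl_periodZ : forall h p m, Fl h (p + 2 * PI * IZR m) = Fl h p + 2 * PI * IZR m.
Proof.
  intros. unfold Fl. pose proof PI_RGT_0 as Hpi. destruct (Rlt_dec 1 h).
  - unfold br2. rewrite sin_periodZ, cos_periodZ. ring.
  - unfold br1. rewrite sin_periodZ, cos_periodZ.
    replace ((p + 2 * PI * IZR m) / (2 * PI)) with (p / (2 * PI) + IZR m) by (field; lra).
    rewrite (IP_spec _ (Int_part (p / (2 * PI)) + m)).
    + rewrite plus_IZR. ring.
    + rewrite plus_IZR. pose proof (IP_bounds (p / (2 * PI))). lra.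
Qed.

Lemma EQ12 : forall h p k, 0 < 1 - h * cos p -> 0 < h - cos p ->
  IZR k < p / (2 * PI) < IZR k + 1 -> br2 h p = 2 * PI * IZR k + br1 h p.
Proof.
  intros h p k H1 H2 Hk. pose proof PI_RGT_0 as Hpi.
  destruct (L1 h p H1) as [C1 S1]. destruct (L2 h p H2) as [C2 S2].
  destruct (cos_sin_eq (br2 h p) (2 * PI * IZR k + br1 h p)) as [z Hz].
  - rewrite Rplus_comm, cos_periodZ. congruence.
  - rewrite Rplus_comm, sin_periodZ. congruence.
  - assert (Hp : 0 < p - 2 * PI * IZR k < 2 * PI).
    { destruct Hk as [Ha Hb]. split.
      - apply Rmult_lt_compat_l with (r := 2*PI) in Ha; [|lra].
        replace (2 * PI * (p / (2 * PI))) with p in Ha by (field; lra). lra.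
      - apply Rmult_lt_compat_l with (r := 2*PI) in Hb; [|lra].
        replace (2 * PI * (p / (2 * PI))) with p in Hb by (field; lra). lra. }
    assert (Hzb : Rabs (2 * PI * IZR z) < 2 * PI).
    { unfold br2, br1 in Hz. pose proof (atan_bound (sin p / (h - cos p))).
      pose proof (atan_bound (- h * sin p / (1 - h * cos p))). apply Rabs_def1; lra. }
    apply IZR_2PI_small in Hzb. rewrite Hzb in Hz. simpl in Hz. lra.
Qed.

Lemma cpt_div' : forall f g x, continuity_pt f x -> continuity_pt g x -> g x <> 0 ->
  continuity_pt (fun y => f y / g y) x.
Proof. intros f g x Hf Hg Hn; exact (continuity_pt_div f g x Hf Hg Hn). Qed.

Lemma loc_gt : forall g t0 a, continuity_pt g t0 -> a < g t0 ->
  exists d, 0 < d /\ forall t, Rabs (t - t0) < d -> a < g t.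
Proof.
  intros g t0 a Hg Ha. destruct (cpt_eps g t0 Hg (g t0 - a)) as [d [Hd Hz]]; [lra|].
  exists d. split; auto. intros t Ht. specialize (Hz t Ht). apply Rabs_def2 in Hz. lra.
Qed.
Lemma loc_lt : forall g t0 a, continuity_pt g t0 -> g t0 < a ->
  exists d, 0 < d /\ forall t, Rabs (t - t0) < d -> g t < a.
Proof.
  intros g t0 a Hg Ha. destruct (cpt_eps g t0 Hg (a - g t0)) as [d [Hd Hz]]; [lra|].
  exists d. split; auto. intros t Ht. specialize (Hz t Ht). apply Rabs_def2 in Hz. lra.
Qed.

Lemma loc_ext : forall f g x d, 0 < d -> (forall y, Rabs (y - x) < d -> f y = g y) ->
  continuity_pt f x -> continuity_pt g x.
Proof. intros f g x d Hd Hfg Hf. apply (continuity_pt_locally_ext f g d x); auto. Qed.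

Lemma cos1_2PI : forall p, cos p = 1 -> exists k, p = 2 * PI * IZR k.
Proof.
  intros p Hp. destruct (rep_exists p) as [k [v [Hv Hr]]]. exists k.
  rewrite Hv, cos_periodZ in Hp. apply cos_eq1_small in Hp; auto. lra.
Qed.


Lemma cont_br2 : forall (h ps : R -> R) (t0 : R), continuity_pt h t0 -> continuity_pt ps t0 -> (forall t, 0 <= h t) ->
  h t0 - cos (ps t0) <> 0 -> continuity_pt (fun t => br2 (h t) (ps t)) t0.
Proof.
  intros h ps t0 Hh Hps Hpos Hn. unfold br2. apply cpt_plus; [apply cpt_minus; [auto| apply cpt_const]|].
  apply cpt_atan. apply cpt_div'; auto; [apply cpt_sin; auto| apply cpt_minus; [auto| apply cpt_cos; auto]].
Qed.

Lemma cont_br1 : forall (h ps : R -> R) (t0 : R), continuity_pt h t0 -> continuity_pt ps t0 -> (forall t, 0 <= h t) ->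
  forall c, 1 - h t0 * cos (ps t0) <> 0 -> continuity_pt (fun t => c + br1 (h t) (ps t)) t0.
Proof.
  intros h ps t0 Hh Hps Hpos c Hn. unfold br1. apply cpt_plus; [apply cpt_const|].
  apply cpt_atan. apply cpt_div'; auto.
  - apply cpt_mult; [apply cpt_opp; auto| apply cpt_sin; auto].
  - apply cpt_minus; [apply cpt_const| apply cpt_mult; [auto| apply cpt_cos; auto]].
Qed.

Lemma Fl_cont : forall (h ps : R -> R) (t0 : R), continuity_pt h t0 -> continuity_pt ps t0 -> (forall t, 0 <= h t) ->
  (1 < h t0 \/ forall k, ps t0 <> 2 * PI * IZR k) ->
  continuity_pt (fun t => Fl (h t) (ps t)) t0.
Proof.
  intros h ps t0 Hh Hps Hpos Hc. pose proof PI_RGT_0 as Hpi.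
  destruct (Rlt_dec 1 (h t0)) as [Hg|Hg].
  - destruct (loc_gt h t0 1 Hh Hg) as [d [Hd Hl]].
    apply (loc_ext (fun t => br2 (h t) (ps t)) _ t0 d Hd).
    + intros y Hy. unfold Fl. destruct (Rlt_dec 1 (h y)); [reflexivity|]. specialize (Hl y Hy). lra.
    + apply (cont_br2 h ps t0 Hh Hps Hpos). pose proof (COS_bound (ps t0)). lra.
  - destruct Hc as [Hc|Hc]; [lra|].
    set (k := Int_part (ps t0 / (2 * PI))).
    assert (Hk : IZR k < ps t0 / (2 * PI) < IZR k + 1).
    { pose proof (IP_bounds (ps t0 / (2 * PI))) as Hb. fold k in Hb. split; [|lra].
      destruct Hb as [Hb _]. destruct Hb as [Hb|Hb]; auto. exfalso. apply (Hc k). rewrite Hb. field. lra. }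
    assert (Hpc : continuity_pt (fun t => ps t / (2 * PI)) t0).
    { apply cpt_div'; [auto| apply cpt_const| lra]. }
    destruct (loc_gt _ t0 (IZR k) Hpc (proj1 Hk)) as [d1 [Hd1 P1]].
    destruct (loc_lt _ t0 (IZR k + 1) Hpc (proj2 Hk)) as [d2 [Hd2 P2]].
    assert (Hcos : cos (ps t0) < 1).
    { pose proof (COS_bound (ps t0)). destruct (Req_dec (cos (ps t0)) 1) as [He|]; [|lra].
      exfalso. destruct (cos1_2PI _ He) as [z Hz]. apply (Hc z). auto. }
    assert (Hd0 : 0 < 1 - h t0 * cos (ps t0)).
    { pose proof (Hpos t0). destruct (Req_dec (h t0) 1) as [->|]; [lra|]. pose proof (COS_bound (ps t0)). nra. }
    assert (Hc1 : continuity_pt (fun t => 1 - h t * cos (ps t)) t0).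
    { apply cpt_minus; [apply cpt_const| apply cpt_mult; [auto| apply cpt_cos; auto]]. }
    destruct (loc_gt _ t0 0 Hc1 Hd0) as [d3 [Hd3 P3]].
    destruct (Rlt_dec (h t0) 1) as [Hlt|Hge].
    + destruct (loc_lt h t0 1 Hh Hlt) as [d4 [Hd4 P4]].
      set (d := Rmin (Rmin d1 d2) d4).
      assert (Hd : 0 < d) by (unfold d; repeat apply Rmin_glb_lt; auto).
      apply (loc_ext (fun t => 2 * PI * IZR k + br1 (h t) (ps t)) _ t0 d Hd).
      * intros y Hy. assert (Hy1 : Rabs (y - t0) < d1) by (unfold d in Hy; pose proof (Rmin_l (Rmin d1 d2) d4); pose proof (Rmin_l d1 d2); lra).
        assert (Hy2 : Rabs (y - t0) < d2) by (unfold d in Hy; pose proof (Rmin_l (Rmin d1 d2) d4); pose proof (Rmin_r d1 d2); lra).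
        assert (Hy4 : Rabs (y - t0) < d4) by (unfold d in Hy; pose proof (Rmin_r (Rmin d1 d2) d4); lra).
        unfold Fl. destruct (Rlt_dec 1 (h y)) as [Hb|]; [specialize (P4 y Hy4); lra|].
        rewrite (IP_spec _ k); [reflexivity|]. specialize (P1 y Hy1). specialize (P2 y Hy2). lra.
      * apply (cont_br1 h ps t0 Hh Hps Hpos). lra.
    + assert (Hh1 : h t0 = 1) by lra.
      assert (Hc2 : continuity_pt (fun t => h t - cos (ps t)) t0).
      { apply cpt_minus; [auto| apply cpt_cos; auto]. }
      destruct (loc_gt _ t0 0 Hc2 ltac:(lra)) as [d4 [Hd4 P4]].
      set (d := Rmin (Rmin d1 d2) (Rmin d3 d4)).
      assert (Hd : 0 < d) by (unfold d; repeat apply Rmin_glb_lt; auto).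
      apply (loc_ext (fun t => 2 * PI * IZR k + br1 (h t) (ps t)) _ t0 d Hd).
      * intros y Hy.
        assert (Hy1 : Rabs (y - t0) < d1) by (unfold d in Hy; pose proof (Rmin_l (Rmin d1 d2) (Rmin d3 d4)); pose proof (Rmin_l d1 d2); lra).
        assert (Hy2 : Rabs (y - t0) < d2) by (unfold d in Hy; pose proof (Rmin_l (Rmin d1 d2) (Rmin d3 d4)); pose proof (Rmin_r d1 d2); lra).
        assert (Hy3 : Rabs (y - t0) < d3) by (unfold d in Hy; pose proof (Rmin_r (Rmin d1 d2) (Rmin d3 d4)); pose proof (Rmin_l d3 d4); lra).
        assert (Hy4 : Rabs (y - t0) < d4) by (unfold d in Hy; pose proof (Rmin_r (Rmin d1 d2) (Rmin d3 d4)); pose proof (Rmin_r d3 d4); lra).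
        specialize (P1 y Hy1). specialize (P2 y Hy2). specialize (P3 y Hy3). specialize (P4 y Hy4).
        unfold Fl. destruct (Rlt_dec 1 (h y)).
        -- symmetry. apply EQ12; auto.
        -- rewrite (IP_spec _ k); [reflexivity| lra].
      * apply (cont_br1 h ps t0 Hh Hps Hpos). lra.
Qed.

Lemma Fl_cross : forall (h ps : R -> R) (t0 : R), continuity_pt h t0 -> continuity_pt ps t0 -> (forall t, 0 <= h t) ->
  forall (k0 : Z) (corr : R -> R), h t0 < 1 ->
  (exists d, 0 < d /\ forall t, Rabs (t - t0) < d ->
     (t < t0 -> 2 * PI * (IZR k0 - 1) < ps t < 2 * PI * IZR k0 /\ corr t = 2 * PI) /\
     (t0 <= t -> 2 * PI * IZR k0 <= ps t < 2 * PI * (IZR k0 + 1) /\ corr t = 0)) ->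
  continuity_pt (fun t => Fl (h t) (ps t) + corr t) t0.
Proof.
  intros h ps t0 Hh Hps Hpos k0 corr Hlt [d0 [Hd0 P0]]. pose proof PI_RGT_0 as Hpi.
  destruct (loc_lt h t0 1 Hh Hlt) as [d4 [Hd4 P4]].
  set (d := Rmin d0 d4).
  assert (Hd : 0 < d) by (unfold d; apply Rmin_glb_lt; auto).
  apply (loc_ext (fun t => 2 * PI * IZR k0 + br1 (h t) (ps t)) _ t0 d Hd).
  - intros y Hy. assert (Hy0 : Rabs (y - t0) < d0) by (unfold d in Hy; pose proof (Rmin_l d0 d4); lra).
    assert (Hy4 : Rabs (y - t0) < d4) by (unfold d in Hy; pose proof (Rmin_r d0 d4); lra).
    specialize (P4 y Hy4). destruct (P0 y Hy0) as [Q1 Q2].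
    unfold Fl. destruct (Rlt_dec 1 (h y)); [lra|].
    destruct (Rlt_dec y t0) as [Hl|Hl].
    + destruct (Q1 Hl) as [[Qa Qb] Qc]. rewrite Qc.
      rewrite (IP_spec _ (k0 - 1)).
      * rewrite minus_IZR. ring.
      * rewrite minus_IZR. split.
        -- apply Rmult_le_reg_l with (2 * PI); [lra|]. replace (2 * PI * (ps y / (2 * PI))) with (ps y) by (field; lra). lra.
        -- apply Rmult_lt_reg_l with (2 * PI); [lra|]. replace (2 * PI * (ps y / (2 * PI))) with (ps y) by (field; lra). lra.
    + destruct (Q2 ltac:(lra)) as [[Qa Qb] Qc]. rewrite Qc.
      rewrite (IP_spec _ k0).
      * ring.
      * split.
        -- apply Rmult_le_reg_l with (2 * PI); [lra|]. replace (2 * PI * (ps y / (2 * PI))) with (ps y) by (field; lra). lra.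
        -- apply Rmult_lt_reg_l with (2 * PI); [lra|]. replace (2 * PI * (ps y / (2 * PI))) with (ps y) by (field; lra). lra.
  - apply (cont_br1 h ps t0 Hh Hps Hpos). pose proof (Hpos t0). pose proof (COS_bound (ps t0)). nra.
Qed.

Lemma Phi_small : forall v, Rabs v <= E0 -> Phi v = 2 * v.
Proof.
  intros v Hv. pose proof (Phi_rep v 0 ltac:(unfold E0, W0 in *; lra)) as P.
  rewrite Rmult_0_r, Rplus_0_r in P. simpl in P. rewrite Rmult_0_r, Rplus_0_r in P.
  rewrite P. apply phi0_small; auto.
Qed.

Lemma pow2_pos : forall n, 0 < 2 ^ n.
Proof. intros. apply pow_lt. lra. Qed.

Lemma Phin_small : forall n v, Rabs v <= E0 / 2 ^ n -> Phin n v = 2 ^ n * v.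
Proof.
  induction n; intros v Hv.
  - simpl. ring.
  - unfold Phin. rewrite Nat.iter_succ_r. fold (Phin n).
    pose proof (pow2_pos n) as Hp.
    assert (Hv2 : Rabs v <= E0 / 2 ^ n / 2) by (simpl in Hv; replace (E0 / 2 ^ n / 2) with (E0 / (2 * 2 ^ n)) by (field; lra); auto).
    rewrite Phi_small.
    + rewrite IHn. simpl; ring. rewrite Rabs_mult, Rabs_right by lra.
      apply Rmult_le_reg_r with (/2); [lra|]. replace (2 * Rabs v * / 2) with (Rabs v) by field. lra.
    + apply Rle_trans with (E0 / 2 ^ n / 2); auto. unfold E0.
      assert (1 <= 2 ^ n) by (clear; induction n; simpl; lra).
      unfold Rdiv. rewrite Rmult_assoc. apply Rmult_le_reg_l with 10; [lra|].
      field_simplify; [|lra]. apply Rmult_le_reg_r with (2 * 2 ^ n); [lra|].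
      field_simplify; lra.
Qed.

Lemma cont_Phin : forall n x, continuity_pt (Phin n) x.
Proof.
  induction n; intros x.
  - apply cpt_id.
  - change (Phin (S n)) with (fun y => Phi (Phin n y)). apply (cpt_comp (Phin n) Phi); auto. apply cont_Phi.
Qed.

Lemma cont_Hn : forall n x, continuity_pt (Hn n) x.
Proof.
  induction n; intros x.
  - apply cpt_const.
  - change (Hn (S n)) with (fun y => Hn n y * H (Phin n y)). apply cpt_mult; auto.
    apply (cpt_comp (Phin n) H); [apply cont_Phin| apply cont_H].
Qed.

Lemma Phin_0 : forall n, Phin n 0 = 0.
Proof. intros. rewrite Phin_small; [ring|]. rewrite Rabs_R0. unfold E0. apply Rmult_le_pos; [lra| left; apply Rinv_0_lt_compat, pow2_pos]. Qed.

Lemma Hn_0 : forall n, Hn n 0 = (1/2) ^ n.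
Proof.
  intros. apply Hn_const. intros j _. rewrite Phin_0. replace 0 with (2 * PI * IZR 0) by (simpl; ring).
  apply H_0.
Qed.

Definition hh (n : nat) (t : R) : R := Hn n (2 * PI * t).
Definition ps (n : nat) (t : R) : R := Phin n (2 * PI * t) - 2 * PI * t.
Definition Lam (n : nat) (t : R) : R :=
  2 * PI * t + Fl (hh n t) (ps n t) + (if Rlt_dec t 0 then 2 * PI else 0) - (if Rle_dec 1 t then 2 * PI else 0).

Lemma cont_hh : forall n t, continuity_pt (hh n) t.
Proof.
  intros. unfold hh. apply (cpt_comp (fun y => 2 * PI * y) (Hn n)); [cont| apply cont_Hn].
Qed.
Lemma cont_ps : forall n t, continuity_pt (ps n) t.
Proof.
  intros. unfold ps. apply cpt_minus; [|cont].
  apply (cpt_comp (fun y => 2 * PI * y) (Phin n)); [cont| apply cont_Phin].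
Qed.
Lemma hh_pos : forall n t, 0 <= hh n t.
Proof. intros. left. apply Hn_pos. Qed.

Lemma IZR_pow2 : forall n, IZR (2 ^ Z.of_nat n) = 2 ^ n.
Proof. intros. rewrite <- pow_IZR. reflexivity. Qed.

Lemma not_bad : forall n t, (1 <= n)%nat -> ~ (hh n t = 1 /\ cos (ps n t) = 1).
Proof.
  intros n t Hn1 [Ha Hb]. destruct (cos1_2PI _ Hb) as [k Hk]. unfold ps, hh in *.
  destruct (dyn n (2 * PI * t) k Hn1 ltac:(lra)) as [Hd|[_ Hd]]; rewrite Ha in Hd.
  - pose proof (pow2_ge2 n Hn1). lra.
  - pose proof (pow_half_le n Hn1). lra.
Qed.

Lemma Lam_cont : forall n t, (1 <= n)%nat -> 0 <= t <= 1 -> continuity_pt (Lam n) t.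
Proof.
  intros n t Hn1 Ht. pose proof PI_RGT_0 as Hpi.
  pose proof (cont_hh n t) as Ch. pose proof (cont_ps n t) as Cp.
  destruct (Req_dec t 0) as [->|Ht0]; [|destruct (Req_dec t 1) as [->|Ht1]].
  -
    set (corr := fun y : R => if Rlt_dec y 0 then 2 * PI else 0).
    assert (Hc : continuity_pt (fun y => Fl (hh n y) (ps n y) + corr y) 0).
    { apply (Fl_cross (hh n) (ps n) 0 (cont_hh n 0) (cont_ps n 0) (hh_pos n) 0%Z).
      - unfold hh. rewrite Rmult_0_r, Hn_0. pose proof (pow_half_le n Hn1). lra.
      - set (d := E0 / (2 * PI * 2 ^ n)).
        assert (Hd : 0 < d) by (unfold d, E0; pose proof (pow2_pos n); apply Rmult_lt_0_compat; [lra| apply Rinv_0_lt_compat; nra]).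
        exists d. split; auto. intros y Hy. rewrite Rminus_0_r in Hy.
        assert (Hps : ps n y = (2 ^ n - 1) * (2 * PI * y)).
        { unfold ps. rewrite Phin_small; [ring|]. rewrite Rabs_mult, Rabs_right by lra.
          apply Rle_trans with (2 * PI * d); [apply Rmult_le_compat_l; lra|].
          right. unfold d. field. split; [pose proof (pow2_pos n); lra| lra]. }
        assert (Hb : (2 ^ n - 1) * Rabs y < 1).
        { pose proof (pow2_pos n). assert (2 ^ n * d < 1).
          { unfold d, E0. replace (2 ^ n * (1 / 10 / (2 * PI * 2 ^ n))) with (1 / (20 * PI)) by (field; lra).
            pose proof PI_gt2. apply Rmult_lt_reg_r with (20 * PI); [lra|]. field_simplify; lra. }
          pose proof (Rabs_pos y). nra. }
        pose proof (pow2_ge2 n Hn1).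
        split; intros Hy0; unfold corr.
        + destruct (Rlt_dec y 0); [|lra]. rewrite Rabs_left in Hb by lra. rewrite Hps. simpl IZR. split; [|reflexivity].
          assert (A : -1 < (2 ^ n - 1) * y < 0) by nra.
          replace ((2 ^ n - 1) * (2 * PI * y)) with (2 * PI * ((2 ^ n - 1) * y)) by ring. nra.
        + destruct (Rlt_dec y 0); [lra|]. rewrite Rabs_right in Hb by lra. rewrite Hps. simpl IZR. split; [|reflexivity].
          assert (A : 0 <= (2 ^ n - 1) * y < 1) by nra.
          replace ((2 ^ n - 1) * (2 * PI * y)) with (2 * PI * ((2 ^ n - 1) * y)) by ring. nra. }
    apply (loc_ext (fun y => 2 * PI * y + (Fl (hh n y) (ps n y) + corr y)) _ 0 1); [lra| |].
    + intros y Hy. rewrite Rminus_0_r in Hy. apply Rabs_def2 in Hy. unfold Lam, corr.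
      destruct (Rle_dec 1 y); [lra|]. ring.
    + apply cpt_plus; [cont| exact Hc].
  -
    set (corr := fun y : R => if Rlt_dec y 1 then 2 * PI else 0).
    set (k0 := (2 ^ Z.of_nat n - 1)%Z).
    assert (Hk0 : IZR k0 = 2 ^ n - 1) by (unfold k0; rewrite minus_IZR, IZR_pow2; reflexivity).
    assert (Hc : continuity_pt (fun y => Fl (hh n y) (ps n y) + corr y) 1).
    { apply (Fl_cross (hh n) (ps n) 1 (cont_hh n 1) (cont_ps n 1) (hh_pos n) k0).
      - unfold hh. replace (2 * PI * 1) with (0 + 2 * PI * IZR 1) by (simpl; ring).
        rewrite Hn_periodZ, Hn_0. pose proof (pow_half_le n Hn1). lra.
      - set (d := E0 / (2 * PI * 2 ^ n)).
        assert (Hd : 0 < d) by (unfold d, E0; pose proof (pow2_pos n); apply Rmult_lt_0_compat; [lra| apply Rinv_0_lt_compat; nra]).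
        exists d. split; auto. intros y Hy.
        assert (Hps : ps n y = (2 ^ n - 1) * (2 * PI * (y - 1)) + 2 * PI * (2 ^ n - 1)).
        { unfold ps. replace (2 * PI * y) with (2 * PI * (y - 1) + 2 * PI * IZR 1) at 1 by (simpl; ring).
          rewrite Phin_periodZ, Z.mul_1_r, IZR_pow2.
          rewrite Phin_small; [simpl; ring|]. rewrite Rabs_mult, Rabs_right by lra.
          apply Rle_trans with (2 * PI * d); [apply Rmult_le_compat_l; lra|].
          right. unfold d. field. split; [pose proof (pow2_pos n); lra| lra]. }
        assert (Hb : (2 ^ n - 1) * Rabs (y - 1) < 1).
        { pose proof (pow2_pos n). assert (2 ^ n * d < 1).
          { unfold d, E0. replace (2 ^ n * (1 / 10 / (2 * PI * 2 ^ n))) with (1 / (20 * PI)) by (field; lra).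
            pose proof PI_gt2. apply Rmult_lt_reg_r with (20 * PI); [lra|]. field_simplify; lra. }
          pose proof (Rabs_pos (y - 1)). nra. }
        pose proof (pow2_ge2 n Hn1). rewrite Hk0.
        split; intros Hy0; unfold corr.
        + destruct (Rlt_dec y 1); [|lra]. rewrite Rabs_left in Hb by lra. rewrite Hps. split; [|reflexivity].
          assert (A : -1 < (2 ^ n - 1) * (y - 1) < 0) by nra.
          replace ((2 ^ n - 1) * (2 * PI * (y - 1))) with (2 * PI * ((2 ^ n - 1) * (y - 1))) by ring. nra.
        + destruct (Rlt_dec y 1); [lra|]. rewrite Rabs_right in Hb by lra. rewrite Hps. split; [|reflexivity].
          assert (A : 0 <= (2 ^ n - 1) * (y - 1) < 1) by nra.
          replace ((2 ^ n - 1) * (2 * PI * (y - 1))) with (2 * PI * ((2 ^ n - 1) * (y - 1))) by ring. nra. }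
    apply (loc_ext (fun y => 2 * PI * y + (Fl (hh n y) (ps n y) + corr y) - 2 * PI) _ 1 1); [lra| |].
    + intros y Hy. apply Rabs_def2 in Hy. unfold Lam, corr.
      destruct (Rlt_dec y 0); [lra|]. destruct (Rle_dec 1 y); destruct (Rlt_dec y 1); try lra; ring.
    + apply cpt_minus; [apply cpt_plus; [cont| exact Hc]| apply cpt_const].
  -
    assert (Hc : continuity_pt (fun y => Fl (hh n y) (ps n y)) t).
    { apply (Fl_cont (hh n) (ps n) t (cont_hh n t) (cont_ps n t) (hh_pos n)).
      destruct (Rlt_dec 1 (hh n t)) as [|Hle]; [left; auto| right]. intros k Hk.
      unfold ps, hh in *. destruct (dyn n (2 * PI * t) k Hn1 ltac:(lra)) as [Hd|[[m Hm] _]].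
      - pose proof (pow2_ge2 n Hn1). lra.
      - assert (Htm : t = IZR m) by (apply Rmult_eq_reg_l with (2 * PI); lra).
        assert (Hab : 0 < IZR m < 1) by lra. destruct Hab as [Ha Hb]. apply lt_IZR in Ha. apply lt_IZR in Hb. lia. }
    set (d := Rmin t (1 - t)).
    assert (Hd : 0 < d) by (unfold d; apply Rmin_glb_lt; lra).
    apply (loc_ext (fun y => 2 * PI * y + Fl (hh n y) (ps n y)) _ t d Hd).
    + intros y Hy. apply Rabs_def2 in Hy. pose proof (Rmin_l t (1 - t)) as M1. pose proof (Rmin_r t (1 - t)) as M2.
      unfold Lam. fold d in M1, M2. destruct (Rlt_dec y 0); [lra|]. destruct (Rle_dec 1 y); [lra|]. ring.
    + apply cpt_plus; [cont| exact Hc].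
Qed.

Lemma Lam_diff : forall n, Lam n 1 - Lam n 0 = 2 * PI * IZR (2 ^ Z.of_nat n - 1).
Proof.
  intros n. unfold Lam.
  destruct (Rlt_dec 1 0); [lra|]. destruct (Rle_dec 1 1); [|lra].
  destruct (Rlt_dec 0 0); [lra|]. destruct (Rle_dec 1 0); [lra|].
  assert (Hh : hh n 1 = hh n 0).
  { unfold hh. rewrite Rmult_0_r. replace (2 * PI * 1) with (0 + 2 * PI * IZR 1) by (simpl; ring).
    apply Hn_periodZ. }
  assert (Hp : ps n 1 = ps n 0 + 2 * PI * IZR (2 ^ Z.of_nat n - 1)).
  { unfold ps. rewrite Rmult_0_r. replace (2 * PI * 1) with (0 + 2 * PI * IZR 1) at 1 by (simpl; ring).
    rewrite Phin_periodZ, Z.mul_1_r, minus_IZR, IZR_pow2. simpl IZR. ring. }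
  rewrite Hh, Hp, Fl_periodZ. ring.
Qed.

Lemma index_n : forall n, (1 <= n)%nat -> fixed_point_index (iter2 n fmap) (0,0) (2 ^ Z.of_nat n - 1)%Z.
Proof.
  intros n Hn1. split.
  - replace (0,0) with (0 * cos 0, 0 * sin 0) by (f_equal; ring).
    rewrite iter_polar by lra. f_equal; ring.
  - exists 1. split; [lra|]. split.
    + intros x _ Hx. apply (no_fix n); auto.
    + intros r Hr Hr1.
      apply (winding_from_lift _ (Lam n) (fun t => r * rw (hh n t) (ps n t))).
      * intros t Ht. apply Lam_cont; auto.
      * intros t Ht. pose proof PI_RGT_0 as Hpi.
        assert (Hw : 0 < rw (hh n t) (ps n t)) by (apply rw_pos; [apply hh_pos| apply not_bad; auto]).
        split; [apply Rmult_lt_0_compat; auto|].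
        destruct (Fl_lift (hh n t) (ps n t) (hh_pos n t) (not_bad n t Hn1)) as [Cf Sf].
        assert (HL : exists m, Lam n t = 2 * PI * t + Fl (hh n t) (ps n t) + 2 * PI * IZR m).
        { unfold Lam. destruct (Rlt_dec t 0); [lra|]. destruct (Rle_dec 1 t).
          - exists (-1)%Z. simpl IZR. ring.
          - exists 0%Z. simpl IZR. ring. }
        destruct HL as [m Hm]. rewrite Hm, cos_periodZ, sin_periodZ.
        unfold add2, sub2. cbn [fst snd]. rewrite !Rplus_0_l.
        rewrite iter_polar by lra. cbn [fst snd].
        assert (HP : Phin n (2 * PI * t) = 2 * PI * t + ps n t) by (unfold ps; ring).
        rewrite HP. fold (hh n t).
        rewrite cos_plus, sin_plus, (cos_plus (2 * PI * t)), (sin_plus (2 * PI * t)), Cf, Sf.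
        f_equal; field; lra.
      * apply Lam_diff.
Qed.

Theorem mainTheorem9 :
  exists (f : R2 -> R2) (p : R2),
    continuous2 f /\ f p = p /\
    (exists eps, 0 < eps /\
       forall x, dist2 x p < eps -> periodic_point f x -> x = p) /\
    ~ isolated_invariant_singleton f p /\
    (forall n : nat, (1 <= n)%nat ->
       fixed_point_index (iter2 n f) p (2 ^ Z.of_nat n - 1)%Z).
Proof.
  exists fmap, (0,0). split; [apply continuous_fmap|]. split; [apply fmap_0|].
  split; [exists 1; split; [lra|]; intros x _ Hx; apply periodic_zero; auto|].
  split; [apply not_isolated|]. apply index_n.
Qed.
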